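(* Let $\mathcal{A}$ be a monotone allocation rule for a combinatorial auction problem, let $\mathbf{t}$ be the true type profile, and let $(A_1,\dots,A_n)$ be a feasible allocation maximizing $\sum_i t_i(A_i)$. Let $D=(\mathbf{d}^1,\dots,\mathbf{d}^T)$ be a sequence of profiles of single-minded declarations submitted to the mechanism $\mathcal{M}_{\mathcal{A}}$. If agent $i$ minimizes external regret in $D$, then $$\frac1T\sum_{t=1}^T\Big(t_i(\mathcal{A}_i(\mathbf{d}^t))+\theta_i^{\mathcal{A}}(A_i,\mathbf{d}^t_{-i})\Big)\ \ge\ t_i(A_i)-o(1),$$ where $o(1)\to 0$ as $T\to\infty$.
   Context: There is a set $M$ of $m$ items and $n$ agents; the problem specifies which allocation profiles $(X_1,\dots,X_n)$ are feasible. Agent $i$ has a private monotone valuation $t_i:2^M\to\mathbb{R}_{\ge0}$ with $t_i(\emptyset)=0$. A single-minded declaration $(S,x)$ assigns value $x$ to supersets of $S$ and $0$ otherwise. An allocation rule $\mathcal{A}$ maps declaration profiles to feasible allocations, $\mathcal{A}_i(\mathbf{d})$ being agent $i$'s set. Monotone: if agent $i$ wins $S$ by declaring value $v$ for it, he also wins any subset of $S$ declared at any value at least $v$. Critical price: $\theta_i^{\mathcal{A}}(S,\mathbf{d}_{-i})=\inf\{v:\exists d_i,\ d_i(S)=v,\ \mathcal{A}_i(d_i,\mathbf{d}_{-i})=S\}$. Mechanism $\mathcal{M}_{\mathcal{A}}$: replace each declaration $d_i$ by $(S_i,d_i(S_i))$ with $S_i\in\arg\max_S d_i(S)$ (ties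 to smaller sets), run $\mathcal{A}$, and charge each winner the critical price of his set (losers pay $0$). Utility $u_i(\mathbf{d})$ = true value of received set minus payment. Agent $i$ minimizes external regret in $D$ if for every fixed declaration $d$, $\sum_t u_i(d_i^t,\mathbf{d}_{-i}^t)\ge \sum_t u_i(d,\mathbf{d}^t_{-i})-o(T)$. *)

(* Defs.v *)
From HB Require Import structures.
From mathcomp Require Import all_boot all_order all_algebra.
From mathcomp Require Import all_classical all_reals.
From mathcomp Require Import ereal topology normedtype sequences.
Set Implicit Arguments. Unset Strict Implicit. Unset Printing Implicit Defensive.
Import Order.TTheory GRing.Theory Num.Theory numFieldNormedType.Exports.
Local Open Scope classical_set_scope.
Local Open Scope ring_scope.

Section Auction.
Variables (R : realType) (M : finType) (n : nat).

(* A single-minded declaration (S, x): value x for supersets of S, 0 otherwise. *)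
Definition decl := ({set M} * R)%type.
Definition profile := 'I_n -> decl.
Definition allocation := 'I_n -> {set M}.

Definition sm_val (d : decl) (T : {set M}) : R := if d.1 \subset T then d.2 else 0.

Definition valid_decl (d : decl) : Prop := 0 <= d.2.
Definition valid_profile (dp : profile) : Prop := forall j, valid_decl (dp j).

Definition upd (dp : profile) (i : 'I_n) (d : decl) : profile :=
  fun j => if j == i then d else dp j.

Definition allocation_rule (feasible : allocation -> Prop)
  (A : profile -> allocation) : Prop :=
  forall dp, valid_profile dp ->
    feasible (A dp) /\ forall j, A dp j = (dp j).1 \/ A dp j = finset.set0.

Definition monotone (A : profile -> allocation) : Prop :=
  forall (dp : profile) (i : 'I_n) (S S' : {set M}) (v v' : R),
    valid_profile dp -> S' \subset S -> v <= v' ->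
    dp i = (S, v) -> A dp i = S -> A (upd dp i (S', v')) i = S'.

(* Critical price theta_i^A(S, d_{-i}) (extended real: +oo if S is never won). *)
Definition crit (A : profile -> allocation) (i : 'I_n) (S : {set M}) (dp : profile)
  : \bar R :=
  ereal_inf [set (sm_val d S)%:E | d in [set d : decl | valid_decl d /\
                                               A (upd dp i d) i = S]].

Definition payment (A : profile -> allocation) (i : 'I_n) (dp : profile) : R :=
  if A dp i == finset.set0 then 0 else fine (crit A i (A dp i) dp).

Definition utility (tv : 'I_n -> {set M} -> R) (A : profile -> allocation)
  (i : 'I_n) (dp : profile) : R :=
  tv i (A dp i) - payment A i dp.

Definition valuation (v : {set M} -> R) : Prop :=
  v finset.set0 = 0 /\ (forall S : {set M}, 0 <= v S) /\ (forall S T : {set M}, S \subset T -> v S <= v T).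

Definition no_external_regret (tv : 'I_n -> {set M} -> R) (A : profile -> allocation)
  (i : 'I_n) (D : nat -> profile) : Prop :=
  forall d : decl, valid_decl d ->
    exists r : nat -> R, ((fun T : nat => r T / T%:R) @ \oo --> (0 : R)) /\
      forall T : nat,
        \sum_(t < T) utility tv A i (D t) >=
        \sum_(t < T) utility tv A i (upd (D t) i d) - r T.

End Auction.

(* Main.v *)
Require Import Defs.
From HB Require Import structures.
From mathcomp Require Import all_boot all_order all_algebra.
From mathcomp Require Import all_classical all_reals.
From mathcomp Require Import ereal topology normedtype sequences.
From mathcomp Require Import lra.
Import Order.TTheory GRing.Theory Num.Theory numFieldNormedType.Exports.
Local Open Scope classical_set_scope.
Local Open Scope ring_scope.
Set Implicit Arguments.

Lemma upd_upd (R : realType) (M : finType) (n : nat) (dp : profile R M n) i d d' :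
  upd (upd dp i d) i d' = upd dp i d'.
Proof. by apply: funext => j; rewrite /upd; case: eqP. Qed.

Lemma upd_same (R : realType) (M : finType) (n : nat) (dp : profile R M n) i d :
  upd dp i d i = d.
Proof. by rewrite /upd eqxx. Qed.

Lemma crit_upd (R : realType) (M : finType) (n : nat) (A : profile R M n -> allocation M n)
  (dp : profile R M n) i d S : crit A i S (upd dp i d) = crit A i S dp.
Proof.
rewrite /crit; congr ereal_inf; congr image; apply: funext => d'.
by rewrite /= upd_upd.
Qed.

Lemma crit_ge0 (R : realType) (M : finType) (n : nat) (A : profile R M n -> allocation M n)
  (dp : profile R M n) i S : (0 <= crit A i S dp)%E.
Proof.
apply/ereal_infP => y [d [vd _] <-]; rewrite lee_fin /sm_val.
by case: ifP => // _; exact: vd.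
Qed.

Lemma payment_ge0 (R : realType) (M : finType) (n : nat) (A : profile R M n -> allocation M n)
  (dp : profile R M n) i : 0 <= payment A i dp.
Proof. rewrite /payment; case: ifP => // _; exact/fine_ge0/crit_ge0. Qed.

Lemma valid_upd (R : realType) (M : finType) (n : nat) (dp : profile R M n) i d :
  valid_profile dp -> valid_decl d -> valid_profile (upd dp i d).
Proof. by move=> vp vd j; rewrite /upd; case: eqP. Qed.

Lemma per_t (R : realType) (M : finType) (n : nat)
  (feasible : allocation M n -> Prop) (A : profile R M n -> allocation M n)
  (tv : 'I_n -> {set M} -> R) (dp : profile R M n) (i : 'I_n) (S : {set M}) :
  allocation_rule feasible A -> monotone A -> valuation (tv i) -> valid_profile dp ->
  ((tv i S)%:E <= (utility tv A i (upd dp i (S, tv i S)))%:E + crit A i S dp)%E.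
Proof.
move=> Ar Am [t0 [tge0 tmon]] vp.
set v := tv i S; set d : decl R M := (S, v).
have vd : valid_decl d by exact: tge0.
have [_ /(_ i)] := Ar _ (valid_upd i vp vd).
rewrite upd_same /= => -[AS|A0].
- rewrite /utility /payment AS.
  have [S0|Sn0] := eqVneq S finset.set0.
    by rewrite /v S0 ?eqxx /= subr0 t0 add0e; exact: crit_ge0.
  rewrite crit_upd.
  have cle : (crit A i S dp <= v%:E)%E.
    apply: ereal_inf_lbound; exists d; first by split.
    by rewrite /sm_val /= subxx.
  have cfin : crit A i S dp \is a fin_num.
    rewrite ge0_fin_numE ?crit_ge0 //; exact: (le_lt_trans cle (ltry _)).
  rewrite -[in X in (_ <= _ + X)%E](fineK cfin) -EFinD subrK //.
- rewrite /utility /payment A0 eqxx subr0 t0 add0e.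
  have [S0|Sn0] := eqVneq S finset.set0; first by rewrite /v S0 t0; exact: crit_ge0.
  rewrite leNgt; apply/negP => /ereal_inf_lt [y [d' [vd' Ad'] <-]].
  have [_ /(_ i)] := Ar _ (valid_upd i vp vd').
  rewrite upd_same Ad' => -[Sd|]; last by move=> S0; rewrite S0 eqxx in Sn0.
  rewrite /sm_val -Sd subxx lte_fin => lt.
  have := Am (upd dp i d') i S S d'.2 v (valid_upd i vp vd') (subxx _) (ltW lt).
  have e1 : upd dp i d' i = (S, d'.2) by rewrite upd_same Sd -surjective_pairing.
  move=> /(_ e1 Ad'); rewrite upd_upd -/d A0 => S0.
  by rewrite -S0 eqxx in Sn0.
Qed.

Lemma aux_div (R : realFieldType) (x c r s : R) :
  0 < x -> x * c - r <= s -> c - r / x <= x^-1 * s.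
Proof.
move=> x0 h; have : x^-1 * (x * c - r) <= x^-1 * s by rewrite ler_pM2l ?invr_gt0.
by rewrite mulrBr mulKf ?gt_eqF // mulrC.
Qed.

Lemma sum_aux (R : realType) (T : nat) (c : R) (a b : nat -> R) :
  \sum_(t < T) (c + a t - b t) = c *+ T + \sum_(t < T) a t - \sum_(t < T) b t.
Proof. by rewrite sumrB big_split sumr_const card_ord. Qed.

Unset Implicit Arguments.

Theorem lemma3p2 (R : realType) (M : finType) (n : nat)
  (feasible : allocation M n -> Prop) (A : profile R M n -> allocation M n)
  (tv : 'I_n -> {set M} -> R) (Aopt : allocation M n)
  (D : nat -> profile R M n) (i : 'I_n) :
  allocation_rule feasible A -> monotone A ->
  (forall j, valuation (tv j)) ->
  feasible Aopt ->
  (forall X : allocation M n, feasible X ->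
     \sum_(j < n) tv j (X j) <= \sum_(j < n) tv j (Aopt j)) ->
  (forall t, valid_profile (D t)) ->
  no_external_regret tv A i D ->
  exists eps : nat -> R, (eps @ \oo --> (0 : R)) /\
    forall T : nat, (0 < T)%N ->
      (((T%:R)^-1)%:E * (\sum_(t < T) ((tv i (A (D t) i))%:E + crit A i (Aopt i) (D t)))
        >= (tv i (Aopt i) - eps T)%:E)%E.
Proof.
move=> Ar Am tvv _ _ vD nr.
set S := Aopt i; set d : decl R M := (S, tv i S).
have vd : valid_decl d by have [_ [h _]] := tvv i; exact: h.
have [r [rcvg rle]] := nr d vd.
exists (fun T => r T / T%:R); split => // T T0.
set ua := fun t => utility tv A i (D t).
set ud := fun t => utility tv A i (upd (D t) i d).
have step : forall t : 'I_T,
    ((tv i S + ua t - ud t)%:E <= (tv i (A (D t) i))%:E + crit A i S (D t))%E.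
  move=> t.
  have h1 := @per_t R M n feasible A tv (D t) i S Ar Am (tvv i) (vD t).
  have h2 : ua t <= tv i (A (D t) i).
    by rewrite /ua /utility lerBlDr lerDl payment_ge0.
  have := crit_ge0 A (D t) i S.
  case: (crit A i S (D t)) h1 => [c| |] //= h1 _; last by rewrite addey ?leey.
  rewrite -EFinD lee_fin; rewrite -EFinD lee_fin in h1.
  rewrite /ud /d; lra.
have hs : ((\sum_(t < T) (tv i S + ua t - ud t))%:E <=
    \sum_(t < T) ((tv i (A (D t) i))%:E + crit A i S (D t)))%E.
  by rewrite -sumEFin; apply: lee_sum => t _; exact: step.
have key : T%:R * tv i S - r T <= \sum_(t < T) (tv i S + ua t - ud t).
  rewrite sum_aux mulr_natl.
  have h : \sum_(t<T) ud t - r T <= \sum_(t<T) ua t := rle T.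
  lra.
have Tp : 0 < T%:R :> R by rewrite ltr0n.
apply: (@le_trans _ _ ((T%:R)^-1%:E * (\sum_(t<T)(tv i S + ua t - ud t))%:E)%E); last first.
  by apply: lee_wpmul2l => //; rewrite lee_fin invr_ge0 ltW.
rewrite -EFinM lee_fin; exact: aux_div.
Qed.
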